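(* Let $m>1$ and $n>0$ be integers. Then the size of the largest clique in ${\rm SR}(m,n)$ is $\max(m,n+1)$.
   Context: ${\rm SR}(m,n)$ is the graph whose vertices are the vectors in $\{0,1,2,\dots\}^m$ with coordinate sum $n$, two vertices being adjacent when they differ in precisely two coordinate positions. *)

(* Defs.v *)
From mathcomp Require Import all_boot all_order.
Set Implicit Arguments. Unset Strict Implicit. Unset Printing Implicit Defensive.

(* Vertices of SR(m,n): vectors in {0,1,2,...}^m with coordinate sum n.
   Since every coordinate of such a vector is at most n, we represent
   candidate vectors as finite functions 'I_m -> 'I_n.+1 (coordinates in
   {0,...,n}), and vertices are those with coordinate sum n. *)
Definition SRvec (m n : nat) := {ffun 'I_m -> 'I_n.+1}.

Definition SR_vertex (m n : nat) (x : SRvec m n) : bool :=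
  (\sum_(i < m) (x i : nat)) == n.

Definition SR_adj (m n : nat) (x y : SRvec m n) : bool :=
  #|[set i : 'I_m | x i != y i]| == 2.

Definition SR_clique (m n : nat) (K : {set SRvec m n}) : bool :=
  [forall x in K, SR_vertex x] &&
  [forall x in K, forall y in K, (x != y) ==> SR_adj x y].

Definition SR_clique_number (m n : nat) : nat :=
  \max_(K : {set SRvec m n} | SR_clique K) #|K|.

(* Main.v *)
Require Import Defs.
From mathcomp Require Import all_boot all_order.
From mathcomp Require Import zify.
Set Implicit Arguments. Unset Strict Implicit. Unset Printing Implicit Defensive.

Section S.
Variables m n : nat.
Local Notation T := (SRvec m n).

Definition D (x y : T) : {set 'I_m} := [set i | x i != y i].

Lemma inD x y i : (i \in D x y) = (x i != y i).
Proof. by rewrite inE. Qed.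

Lemma notinD x y i : i \notin D x y -> x i = y i.
Proof. by rewrite inD negbK => /eqP. Qed.

Lemma D_tri x y z i : i \in D x y -> i \notin D x z -> i \in D y z.
Proof. rewrite !inD => h /negPn/eqP <-; by rewrite eq_sym. Qed.

Lemma D_sub x y z i : i \in D y z -> (i \in D x y) || (i \in D x z).
Proof.
rewrite !inD => h; case: (eqVneq (x i) (y i)) => [->|//]; by rewrite h orbT.
Qed.

Lemma Dxx x : D x x = set0.
Proof. by apply/setP => i; rewrite inD eqxx inE. Qed.

Lemma DC x y : D x y = D y x.
Proof. by apply/setP => i; rewrite !inD eq_sym. Qed.

Lemma G2 (A : {set 'I_m}) a b : #|A| = 2 -> a \in A -> b \in A -> a != b ->
  A = [set a; b].
Proof.
move=> cA aA bA ab; apply/eqP; rewrite eq_sym eqEcard cards2 ab cA leqnn andbT.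
by apply/subsetP => c; rewrite !inE => /orP[]/eqP->.
Qed.

Lemma other (A : {set 'I_m}) l : #|A| = 2 -> l \in A ->
  exists j, j != l /\ A = [set l; j].
Proof.
move=> cA lA; have h1 : #|A :\ l| = 1 by have := cardsD1 l A; rewrite lA cA /=; lia.
move/eqP: h1 => /cards1P [j hj]; have : j \in A :\ l by rewrite hj set11.
rewrite !inE => /andP[jl jA]; exists j; split => //.
by apply: G2; rewrite // eq_sym.
Qed.

Lemma sumD x y i j : SR_vertex x -> SR_vertex y -> i != j ->
  D x y \subset [set i; j] -> (x i : nat) + x j = y i + y j.
Proof.
move=> /eqP vx /eqP vy ij sub.
have split2 : forall z : T, \sum_(k < m) (z k : nat) =
   z i + z j + \sum_(k < m | (k != i) && (k != j)) (z k : nat).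
  move=> z; rewrite (bigD1 i) //= (bigD1 j) /=; last by rewrite eq_sym.
  rewrite addnA; congr (_ + _); apply: eq_bigl => k; by rewrite andbC.
have e : \sum_(k < m | (k != i) && (k != j)) (x k : nat) =
         \sum_(k < m | (k != i) && (k != j)) (y k : nat).
  apply: eq_bigr => k /andP[ki kj]; congr nat_of_ord; apply: notinD.
  apply: contraL sub => kD; apply/subsetPn; exists k => //.
  by rewrite !inE negb_or ki kj.
have := split2 x; have := split2 y; rewrite vx vy e; lia.
Qed.


Variable K : {set T}.
Hypothesis vert : forall y, y \in K -> SR_vertex y.
Hypothesis cl : forall y z, y \in K -> z \in K -> y != z -> #|D y z| = 2.

Lemma arith (a b c A B C : nat) :
  a + b = A + B -> a + c = A + C -> b + c = B + C -> a = A.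
Proof. lia. Qed.

Lemma eq_subxx (A B : {set 'I_m}) : A = B -> A \subset B.
Proof. by move=> ->. Qed.
Lemma eq_sym_neq (T0 : eqType) (a b : T0) : a != b -> b != a.
Proof. by rewrite eq_sym. Qed.

Lemma Lx x y z i j k : y \in K -> z \in K ->
  i \in D x y -> i \in D x z -> j \in D x y -> j \notin D x z ->
  k \in D x z -> k \notin D x y -> y i = z i.
Proof.
move=> yK zK iy iz jy jz kz ky.
have jyz := D_tri jy jz.
have kyz : k \in D y z by rewrite DC; apply: (D_tri kz ky).
have yz : y != z by apply: contraTneq jyz => ->; rewrite Dxx inE.
have jk : j != k by apply: contraNneq jz => ->.
have eyz := G2 (cl yK zK yz) jyz kyz jk.
apply: notinD; rewrite eyz !inE negb_or; apply/andP; split.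
  by apply: contraNneq jz => e; rewrite -e.
by apply: contraNneq ky => e; rewrite -e.
Qed.

Lemma inter x y z : x \in K -> y \in K -> z \in K -> y != x -> z != x ->
  exists c, c \in D x y /\ c \in D x z.
Proof.
move=> xK yK zK yx zx.
case: (boolP [exists c, (c \in D x y) && (c \in D x z)]).
  by case/existsP => c /andP[h1 h2]; exists c.
rewrite negb_exists => /forallP nc.
have cy : #|D x y| = 2 by apply: cl; rewrite // eq_sym.
have cz : #|D x z| = 2 by apply: cl; rewrite // eq_sym.
have /card_gt0P [c0 c0y] : 0 < #|D x y| by rewrite cy.
have c0z : c0 \notin D x z by move: (nc c0); rewrite c0y.
have yz : y != z by apply: contraNneq c0z => e; rewrite -e.
have sub : D x y :|: D x z \subset D y z.
  apply/subsetP => c; rewrite inE => /orP[h|h].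
    by apply: (D_tri h); move: (nc c); rewrite h.
  by rewrite DC; apply: (D_tri h); move: (nc c); rewrite h andbT.
have I0 : D x y :&: D x z = set0.
  by apply/setP => c; rewrite in_setI in_set0; apply/negbTE; exact: nc c.
have := subset_leq_card sub; rewrite (cl yK zK yz).
have := cardsUI (D x y) (D x z); rewrite I0 cards0 cy cz; lia.
Qed.

Lemma caseA x i j : x \in K -> (forall y, y \in K -> D x y \subset [set i; j]) ->
  #|K| <= n.+1.
Proof.
move=> xK h.
rewrite -(card_in_imset (f := fun y : T => y i)); last first.
  move=> y z yK zK /= e; apply/eqP; apply: contraT => yz.
  have := cl yK zK yz.
  have sub : D y z \subset [set j].
    apply/subsetP => k kD; rewrite inE.
    have : k != i by apply: contraTneq kD => ->; rewrite inD e eqxx.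
    move/orP: (D_sub x kD) => [/(subsetP (h _ yK))|/(subsetP (h _ zK))];
      rewrite !inE => /orP[/eqP->|//]; by rewrite eqxx.
  have := subset_leq_card sub; rewrite cards1 => h1 h2; by move: h1; rewrite h2.
by rewrite -[X in _ <= X]card_ord max_card.
Qed.

Lemma caseB x : 0 < m -> x \in K ->
  (forall i j, exists2 y, y \in K & ~~ (D x y \subset [set i; j])) -> #|K| <= m.
Proof.
move=> m0 xK nA.
case: (set_0Vmem (K :\ x)) => [K1|[y]].
  have := cardsD1 x K; rewrite xK K1 cards0 => ->; by rewrite addn0.
rewrite !inE => /andP[yx yK].
have /cards2P [l [j [lj exy]]] : #|D x y| == 2 by rewrite cl // eq_sym.
have [z zK nz] := nA l j.
have zx : z != x by apply: contraNneq nz => ->; rewrite Dxx sub0set.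
have key : forall l j, l != j -> D x y = [set l; j] ->
    ~~ (D x z \subset [set l; j]) -> l \in D x z -> #|K| <= m.
  move=> {}l {}j {}lj {}exy {}nz lz.
  have [k kz kn] := subsetPn nz.
  move: kn; rewrite !inE negb_or => /andP[kl kj].
  have ezk : D x z = [set l; k].
    by apply: G2 => //; [apply: cl; rewrite // eq_sym | rewrite eq_sym].
  have jy : j \in D x y by rewrite exy !inE eqxx orbT.
  have ly : l \in D x y by rewrite exy !inE eqxx.
  have jz : j \notin D x z.
    apply/negP; rewrite ezk !inE => /orP[]/eqP e;
      [by move: lj; rewrite e eqxx | by move: kj; rewrite e eqxx].
  have ky : k \notin D x y.
    apply/negP; rewrite exy !inE => /orP[]/eqP e;
      [by move: kl; rewrite e eqxx | by move: kj; rewrite e eqxx].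
  have B1 : forall u, u \in K -> u != x -> l \in D x u.
    move=> u uK ux; apply: contraT => lu.
    have [c [cy cu]] := inter xK yK uK yx ux.
    have ju : j \in D x u.
      move: cy; rewrite exy in_set2 => /orP[]/eqP e; last by rewrite -e.
      by rewrite -e cu in lu.
    have [c' [cz' cu']] := inter xK zK uK zx ux.
    have ku : k \in D x u.
      move: cz'; rewrite ezk in_set2 => /orP[]/eqP e; last by rewrite -e.
      by rewrite -e cu' in lu.
    have jk : j != k by rewrite eq_sym.
    have eu : D x u = [set j; k].
      by apply: G2 => //; apply: cl; rewrite // eq_sym.
    have e1 : y l = z l := Lx yK zK ly lz jy jz kz ky.
    have e2 : y j = u j := Lx yK uK jy ju ly lu ku ky.
    have e3 : z k = u k := Lx zK uK kz ku lz lu ju jz.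
    have s1 := sumD (vert xK) (vert yK) lj (eq_subxx exy).
    have s2 := sumD (vert xK) (vert zK) (eq_sym_neq kl) (eq_subxx ezk).
    have s3 := sumD (vert xK) (vert uK) jk (eq_subxx eu).
    have ne : (x l : nat) <> y l.
      by move=> e; move: ly; rewrite inD (val_inj e) eqxx.
    rewrite -e1 in s2; rewrite -e2 -e3 in s3.
    by case: (ne (arith s1 s2 s3)).
  have B2 : forall u v, u \in K -> v \in K -> u != x -> v != x ->
      D x u = D x v -> u = v.
    move=> u v uK vK ux vx e; apply/eqP; apply: contraT => uv.
    have lu := B1 u uK ux.
    have [j' [j'l eu]] := other (cl xK uK (eq_sym_neq ux)) lu.
    have [w [wK wx ne]] : exists w, [/\ w \in K, w != x & D x w != D x u].
      case: (eqVneq (D x y) (D x u)) => h; last by exists y.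
      exists z; split => //; rewrite -h; apply: contraNneq jz => e'; by rewrite e'.
    have lw := B1 w wK wx.
    have [k' [k'l ew]] := other (cl xK wK (eq_sym_neq wx)) lw.
    have k'u : k' \notin D x u.
      rewrite eu !inE (negbTE k'l) /=; apply: contraNneq ne => e'.
      by rewrite ew eu e'.
    have j'w : j' \notin D x w.
      rewrite ew !inE (negbTE j'l) /=; apply: contraNneq ne => e'.
      by rewrite ew eu e'.
    have ju : j' \in D x u by rewrite eu !inE eqxx orbT.
    have kw : k' \in D x w by rewrite ew !inE eqxx orbT.
    have lv : l \in D x v by rewrite -e.
    have jv : j' \in D x v by rewrite -e.
    have e1 : u l = w l := Lx uK wK lu lw ju j'w kw k'u.
    have kv : k' \notin D x v by rewrite -e.
    have e2 : v l = w l := Lx vK wK lv lw jv j'w kw kv.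
    have sub : D u v \subset [set j'].
      apply/subsetP => c cD; rewrite inE.
      have cin : c \in D x u by case/orP: (D_sub x cD) => //; rewrite -e.
      move: cin; rewrite eu !inE => /orP[/eqP ce|//]; subst c.
      by move: cD; rewrite inD e1 e2 eqxx.
    by have := subset_leq_card sub; rewrite cards1 (cl uK vK uv).
  pose f := fun u : T => if u == x then l else odflt l [pick k in D x u :\ l].
  have fP : forall u, u \in K -> u != x -> f u != l /\ D x u = [set l; f u].
    move=> u uK ux; rewrite /f (negbTE ux).
    case: pickP => [k0|none] /=.
      rewrite in_setD1 => /andP[k0l k0u]; split => //; apply: G2 => //.
        by apply: cl; rewrite // eq_sym.
        exact: B1.
      by rewrite eq_sym.
    have [j' [j'l eu]] := other (cl xK uK (eq_sym_neq ux)) (B1 u uK ux).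
    by move: (none j'); rewrite in_setD1 j'l eu !inE eqxx orbT.
  rewrite -(card_in_imset (f := f)); last first.
    move=> u v uK vK /=.
    case: (eqVneq u x) => [->|ux]; case: (eqVneq v x) => [->|vx] //.
    - have [h _] := fP v vK vx; rewrite {1}/f eqxx => e.
      by rewrite -e eqxx in h.
    - have [h _] := fP u uK ux; rewrite {2}/f eqxx => e.
      by rewrite e eqxx in h.
    - move=> e; apply: B2 => //.
      have [_ hu] := fP u uK ux; have [_ hv] := fP v vK vx.
      by rewrite hu hv e.
  by rewrite -[X in _ <= X]card_ord max_card.
have [c [cy cz]] := inter xK yK zK yx zx.
move: cy; rewrite exy !inE => /orP[/eqP ce|/eqP ce]; subst c.
  exact: (key l j).
apply: (key j l) => //; [by rewrite eq_sym | by rewrite exy setUC | by rewrite setUC].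
Qed.

End S.
Arguments D {m n}.

Lemma upper m n (hm : 0 < m) (K : {set SRvec m n}) :
  SR_clique K -> #|K| <= maxn m n.+1.
Proof.
move=> /andP[/forall_inP vert /forall_inP cl0].
have cl : forall y z, y \in K -> z \in K -> y != z -> #|D y z| = 2.
  move=> y z yK zK yz; move/forall_inP: (cl0 y yK) => h.
  by move/implyP: (h z zK) => /(_ yz) /eqP.
case: (set_0Vmem K) => [->|[x xK]]; first by rewrite cards0.
case: (boolP [exists i, exists j, [forall y in K, D x y \subset [set i; j]]]).
  case/existsP => i /existsP [j /forall_inP h].
  exact: leq_trans (caseA cl xK h) (leq_maxr _ _).
rewrite negb_exists => /forallP h.
apply: leq_trans (caseB vert cl hm xK _) (leq_maxl _ _).
move=> i j; move: (h i); rewrite negb_exists => /forallP/(_ j) /forall_inPn [y yK hy].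
by exists y.
Qed.

Lemma adjD m n (a b : SRvec m n) : SR_adj a b = (#|D a b| == 2).
Proof. by []. Qed.

Lemma clique_of m n (K : {set SRvec m n}) :
  (forall y, y \in K -> SR_vertex y) ->
  (forall y z, y \in K -> z \in K -> y != z -> SR_adj y z) -> SR_clique K.
Proof.
move=> h1 h2; apply/andP; split; first by apply/forall_inP.
apply/forall_inP => y yK; apply/forall_inP => z zK; apply/implyP; exact: h2.
Qed.

Lemma lower1 m n (hn : 0 < n) : exists K : {set SRvec m n}, SR_clique K /\ #|K| = m.
Proof.
pose e (i : 'I_m) : SRvec m n := [ffun k => if k == i then ord_max else ord0].
have h0 : (ord_max : 'I_n.+1) != ord0 by rewrite -val_eqE /= -lt0n.
have einj : injective e.
  move=> i j /(congr1 (fun f : SRvec m n => f i)); rewrite !ffunE eqxx.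
  by case: eqP => // _ /eqP; rewrite (negbTE h0).
exists (e @: [set: 'I_m]); split; last by rewrite card_imset // cardsT card_ord.
apply: clique_of.
  move=> y /imsetP [i _ ->]; rewrite /SR_vertex (bigD1 i) //= big1 ?ffunE ?eqxx ?addn0 //.
  by move=> k /negbTE ki; rewrite ffunE ki.
move=> y z /imsetP [i _ ->] /imsetP [j _ ->] ne.
have ij : i != j by apply: contraNneq ne => ->.
rewrite adjD; suff -> : D (e i) (e j) = [set i; j] by rewrite cards2 ij.
apply/setP => k; rewrite !inE !ffunE.
case: (eqVneq k i) => [->|ki]; case: (eqVneq k j) => [kj|kj];
  rewrite ?eqxx ?(negbTE ij) ?(negbTE (eq_sym_neq ij)) ?(negbTE ki) ?(negbTE kj) ?h0 ?(eq_sym ord0) //.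
Qed.

Lemma lower2 m n (hm : 1 < m) : exists K : {set SRvec m n}, SR_clique K /\ #|K| = n.+1.
Proof.
have hm0 : 0 < m by lia.
pose i0 := Ordinal hm0; pose i1 := Ordinal hm.
have i01 : i0 != i1 by rewrite -val_eqE.
pose g (t : 'I_n.+1) : SRvec m n :=
  [ffun k => if k == i0 then t else if k == i1 then rev_ord t else ord0].
have ginj : injective g.
  by move=> t s /(congr1 (fun f : SRvec m n => f i0)); rewrite !ffunE eqxx.
exists (g @: [set: 'I_n.+1]); split; last by rewrite card_imset // cardsT card_ord.
apply: clique_of.
  move=> y /imsetP [t _ ->]; rewrite /SR_vertex (bigD1 i0) //= (bigD1 i1) /= ?(eq_sym_neq i01) //.
  rewrite big1 ?ffunE ?eqxx ?(negbTE (eq_sym_neq i01)) /=.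
    apply/eqP; have := ltn_ord t; lia.
  by move=> k /andP[ki0 ki1]; rewrite ffunE (negbTE ki0) (negbTE ki1).
move=> y z /imsetP [t _ ->] /imsetP [s _ ->] ne.
have ts : t != s by apply: contraNneq ne => ->.
have rts : rev_ord t != rev_ord s by apply: contraNneq ts => /rev_ord_inj ->.
rewrite adjD; suff -> : D (g t) (g s) = [set i0; i1] by rewrite cards2 i01.
apply/setP => k; rewrite !inE !ffunE.
case: (eqVneq k i0) => [->|ki]; case: (eqVneq k i1) => [kj|kj];
  rewrite ?eqxx ?(negbTE ki) ?(negbTE kj) ?(negbTE i01) ?(negbTE (eq_sym_neq i01)) ?ts ?rts ?orbT //.
Qed.

Lemma foo m n (K : {set SRvec m n}) : SR_clique K -> #|K| <= SR_clique_number m n.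
Proof.
move=> cK. rewrite /SR_clique_number.
by apply: leq_bigmax_cond.
Qed.

Theorem proposition10 (m n : nat) (hm : 1 < m) (hn : 0 < n) :
  SR_clique_number m n = maxn m n.+1.
Proof.
apply/eqP; rewrite eqn_leq; apply/andP; split.
  apply/bigmax_leqP => K hK; apply: upper => //; lia.
rewrite geq_max; apply/andP; split.
  have [K [cK cardK]] := @lower1 m n hn.
  by rewrite -{1}cardK; apply: foo.
have [K [cK cardK]] := @lower2 m n hm.
by rewrite -cardK; apply: foo.
Qed.
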